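(* Let $r\ge 0$ and let $\mathcal Y_r(\mathbf q,\dot{\mathbf q},\dots,\mathbf q^{(r)},\mathbf q^{(r+1)},t)$ be a smooth real-valued function. Let $\bar{\mathbf q}(\mathbf q,t)$ be a $C^\infty$ change of coordinates on $\mathbb R^\ell$ with $\det J_{\mathbf q}\bar{\mathbf q}\neq 0$, where $(J_{\mathbf q}\bar{\mathbf q})_{ij}=\partial\bar q_i/\partial q_j$. Let $\widetilde{\mathcal Y}_r(\bar{\mathbf q},\dot{\bar{\mathbf q}},\dots,\bar{\mathbf q}^{(r+1)},t)$ denote $\mathcal Y_r$ expressed in the new variables, i.e. $\mathcal Y_r$ evaluated at $\mathbf q(\bar{\mathbf q},t)$, $\dot{\mathbf q}(\bar{\mathbf q},\dot{\bar{\mathbf q}},t)$, …, $\mathbf q^{(r+1)}(\bar{\mathbf q},\dots,\bar{\mathbf q}^{(r+1)},t)$ (the inverse transformation and its total time derivatives). Then the operator $\mathcal O_r$ is covariant: $$\nabla_{\mathbf q^{(r)}}\mathcal Y_r-(r+1)\frac{d}{dt}\nabla_{\mathbf q^{(r+1)}}\mathcal Y_r=(J_{\mathbf q}\bar{\mathbf q})^T\Big(\nabla_{\bar{\mathbf q}^{(r)}}\widetilde{\mathcal Y}_r-(r+1)\frac{d}{dt}\nabla_{\bar{\mathbf q}^{(r+1)}}\widetilde{\mathcal Y}_r\Big),$$ where both sides are evaluated at corresponding points (equivalently, along any smooth curve $t\mapsto\mathbf q(t)$ and its image $\bar{\mathbf q}(t)=\bar{\mathbf q}(\mathbf q(t)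,t)$).
   Context: $\mathbf q=(q_1,\dots,q_\ell)\in\mathbb R^\ell$; $\mathbf q^{(h)}$ denotes the $h$-th time derivative $d^h\mathbf q/dt^h$ (with $\mathbf q^{(0)}=\mathbf q$), treated as independent variables of the functions considered. For a function $F(\mathbf q,\dots,\mathbf q^{(k)},t)$, $\frac{dF}{dt}=\partial_t F+\sum_{j=0}^{k}\nabla_{\mathbf q^{(j)}}F\cdot\mathbf q^{(j+1)}$ is the total time derivative, and $\nabla_{\mathbf q^{(j)}}F$ is the gradient with respect to the variables $\mathbf q^{(j)}$. For $r\ge0$ and a function $\mathcal Y_r$ depending on $\mathbf q,\dots,\mathbf q^{(r+1)},t$, the extended Lagrangian binomial is $\mathcal O_r[\mathcal Y_r]=\nabla_{\mathbf q^{(r)}}\mathcal Y_r-(r+1)\frac{d}{dt}\nabla_{\mathbf q^{(r+1)}}\mathcal Y_r$ (an $\mathbb R^\ell$-valued function); for $r=0$ it is the usual $\nabla_{\mathbf q}\mathcal L-\frac d{dt}\nabla_{\dot{\mathbf q}}\mathcal L$. *)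

(* Defs.v *)
From Stdlib Require Import Reals Lra Lia ClassicalEpsilon.
Open Scope R_scope.

(* Jet space: a point is (p, t) with p j i = i-th coordinate of q^{(j)}.
   Coordinates are indexed by nat; only i < l and j <= N are relevant. *)
Definition jet := nat -> nat -> R.

Fixpoint fsum (n : nat) (f : nat -> R) : R :=
  match n with O => 0 | S m => fsum m f + f m end.

Definition updJ (p : jet) (j i : nat) (y : R) : jet :=
  fun j' i' => if (Nat.eqb j' j && Nat.eqb i' i)%bool then y else p j' i'.

(* a coordinate of the extended jet space: None = time t, Some (j,i) = q^{(j)}_i *)
Definition coord := option (nat * nat).

Definition partial_lim (F : jet -> R -> R) (v : coord) (p : jet) (t d : R) : Prop :=
  match v with
  | None => derivable_pt_lim (fun s => F p s) t d
  | Some (j, i) => derivable_pt_lim (fun y => F (updJ p j i y) t) (p j i) d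
  end.

(* the partial derivative (chosen classically; meaningful where it exists) *)
Definition pd (F : jet -> R -> R) (v : coord) : jet -> R -> R :=
  fun p t => epsilon (inhabits 0) (fun d => partial_lim F v p t d).

Definition coord_ok (N l : nat) (v : coord) : Prop :=
  match v with None => True | Some (j, i) => (j <= N)%nat /\ (i < l)%nat end.

(* joint continuity in the variables q^{(j)}_i (j <= N, i < l) and t
   (in particular F depends on no other coordinate) *)
Definition cont_jet (N l : nat) (F : jet -> R -> R) : Prop :=
  forall p t eps, eps > 0 -> exists delta, delta > 0 /\
    forall p' t', (forall j i, (j <= N)%nat -> (i < l)%nat -> Rabs (p' j i - p j i) < delta) ->
      Rabs (t' - t) < delta -> Rabs (F p' t' - F p t) < eps.

Fixpoint Ck (k N l : nat) (F : jet -> R -> R) : Prop :=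
  match k with
  | O => cont_jet N l F
  | S k' => cont_jet N l F /\
      forall v, coord_ok N l v ->
        (forall p t, exists d, partial_lim F v p t d) /\ Ck k' N l (pd F v)
  end.

Definition smooth (N l : nat) (F : jet -> R -> R) : Prop := forall k, Ck k N l F.

Definition Dt (l k : nat) (F : jet -> R -> R) : jet -> R -> R :=
  fun p t => pd F None p t +
    fsum (S k) (fun j => fsum l (fun i => pd F (Some (j, i)) p t * p (S j) i)).

(* k-th total time derivative of a function of order 0 *)
Fixpoint Dn (l k : nat) (F : jet -> R -> R) : jet -> R -> R :=
  match k with O => F | S m => Dt l m (Dn l m F) end.

(* a time-dependent map of R^l, f x t i = i-th component, lifted to the jet space *)
Definition comp0 (f : (nat -> R) -> R -> nat -> R) (i : nat) : jet -> R -> R :=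
  fun p t => f (p O) t i.

Definition prolong (l : nat) (f : (nat -> R) -> R -> nat -> R) (p : jet) (t : R) : jet :=
  fun j i => Dn l j (comp0 f i) p t.

Definition Jac (f : (nat -> R) -> R -> nat -> R) (x : nat -> R) (t : R) (a b : nat) : R :=
  pd (comp0 f a) (Some (O, b)) (fun _ => x) t.

Fixpoint det (n : nat) (M : nat -> nat -> R) : R :=
  match n with
  | O => 1
  | S m => fsum (S m) (fun j => (-1) ^ j * M O j *
             det m (fun a b => M (S a) (if Nat.ltb b j then b else S b)))
  end.

Definition Oop (l r : nat) (Y : jet -> R -> R) (p : jet) (t : R) (i : nat) : R :=
  pd Y (Some (r, i)) p t - INR (S r) * Dt l (S r) (pd Y (Some (S r, i))) p t.

(* Main.v *)
Require Import Defs.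
From Stdlib Require Import Reals.
From Stdlib Require Import Lra Lia ClassicalEpsilon Classical FunctionalExtensionality List.
From Coquelicot Require Coquelicot.
Open Scope R_scope.

Lemma fsum_ext n f g : (forall k, (k < n)%nat -> f k = g k) -> fsum n f = fsum n g.
Proof. induction n; simpl; intros H; auto. rewrite IHn, H; auto; lia. Qed.

Lemma fsum_plus n f g : fsum n (fun k => f k + g k) = fsum n f + fsum n g.
Proof. induction n; simpl; [lra|rewrite IHn; lra]. Qed.

Lemma fsum_scal n c f : fsum n (fun k => c * f k) = c * fsum n f.
Proof. induction n; simpl; [lra|rewrite IHn; lra]. Qed.

Lemma fsum_scalr n c f : fsum n (fun k => f k * c) = fsum n f * c.
Proof. induction n; simpl; [lra|rewrite IHn; lra]. Qed.

Lemma fsum_zero n f : (forall k, (k < n)%nat -> f k = 0) -> fsum n f = 0.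
Proof. intros H; rewrite (fsum_ext n f (fun _ => 0)); auto. clear H. induction n; simpl; auto. rewrite IHn; lra. Qed.

Lemma fsum_swap n m (f : nat -> nat -> R) :
  fsum n (fun a => fsum m (fun b => f a b)) = fsum m (fun b => fsum n (fun a => f a b)).
Proof.
  induction n; simpl.
  - symmetry; apply fsum_zero; auto.
  - rewrite IHn, <- fsum_plus. reflexivity.
Qed.

Lemma fsum_delta n m (f : nat -> R) : (m < n)%nat ->
  fsum n (fun k => if Nat.eqb k m then f k else 0) = f m.
Proof.
  induction n; intros H; [lia|]. simpl.
  destruct (Nat.eq_dec m n).
  - subst. rewrite Nat.eqb_refl. rewrite fsum_zero; [lra|].
    intros k Hk. destruct (Nat.eqb_spec k n); [lia|auto].
  - rewrite IHn by lia. destruct (Nat.eqb_spec n m); [lia|lra].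
Qed.

Definition getC (p : jet) (t : R) (v : coord) : R :=
  match v with None => t | Some (j, i) => p j i end.
Definition mvJ (p : jet) (v : coord) (y : R) : jet :=
  match v with None => p | Some (j, i) => updJ p j i y end.
Definition mvT (t : R) (v : coord) (y : R) : R :=
  match v with None => y | Some _ => t end.

Definition coord_eqb (a b : coord) : bool :=
  match a, b with
  | None, None => true
  | Some (j, i), Some (j', i') => Nat.eqb j j' && Nat.eqb i i'
  | _, _ => false end.

Lemma coord_eqb_spec a b : reflect (a = b) (coord_eqb a b).
Proof.
  destruct a as [[j i]|], b as [[j' i']|]; simpl; try (constructor; congruence).
  destruct (Nat.eqb_spec j j'), (Nat.eqb_spec i i'); simpl; constructor; congruence.
Qed.

Lemma getC_mv p t v y c :
  getC (mvJ p v y) (mvT t v y) c = if coord_eqb c v then y else getC p t c.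
Proof.
  destruct v as [[j i]|], c as [[j' i']|]; simpl; auto.
Qed.

Lemma updJ_upd p j i y y' : updJ (updJ p j i y) j i y' = updJ p j i y'.
Proof.
  extensionality a; extensionality b; unfold updJ.
  destruct (Nat.eqb a j && Nat.eqb b i)%bool; auto.
Qed.

Lemma updJ_self p j i : updJ p j i (p j i) = p.
Proof.
  extensionality a; extensionality b; unfold updJ.
  destruct (Nat.eqb_spec a j), (Nat.eqb_spec b i); simpl; subst; auto.
Qed.

Lemma mvJ_mv p v y y' : mvJ (mvJ p v y) v y' = mvJ p v y'.
Proof. destruct v as [[j i]|]; simpl; auto using updJ_upd. Qed.
Lemma mvT_mv t v y y' : mvT (mvT t v y) v y' = mvT t v y'.
Proof. destruct v as [[j i]|]; simpl; auto. Qed.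
Lemma mvJ_self p t v : mvJ p v (getC p t v) = p.
Proof. destruct v as [[j i]|]; simpl; auto using updJ_self. Qed.
Lemma mvT_self p t v : mvT t v (getC p t v) = t.
Proof. destruct v as [[j i]|]; simpl; auto. Qed.

Lemma partial_lim_mv F v p t d :
  partial_lim F v p t d <->
  derivable_pt_lim (fun y => F (mvJ p v y) (mvT t v y)) (getC p t v) d.
Proof. destruct v as [[j i]|]; simpl; tauto. Qed.

Lemma pd_eq F v p t d : partial_lim F v p t d -> pd F v p t = d.
Proof.
  intros H. unfold pd.
  assert (E : exists d, partial_lim F v p t d) by eauto.
  pose proof (epsilon_spec (inhabits 0) _ E) as H2.
  apply partial_lim_mv in H, H2.
  eapply uniqueness_limite; eauto.
Qed.

Definition agree N l (p p' : jet) := forall j i, (j <= N)%nat -> (i < l)%nat -> p' j i = p j i.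

Lemma cont_dep N l F p p' t : cont_jet N l F -> agree N l p p' -> F p' t = F p t.
Proof.
  intros HF Ha. destruct (Req_dec (F p' t) (F p t)) as [e|ne]; auto.
  exfalso. assert (He : Rabs (F p' t - F p t) > 0) by (apply Rabs_pos_lt; lra).
  destruct (HF p t _ He) as [d [Hd H]].
  specialize (H p' t). rewrite Rminus_diag, Rabs_R0 in H.
  assert (Rabs (F p' t - F p t) < Rabs (F p' t - F p t)); [|lra].
  apply H; auto. intros j i Hj Hi. rewrite Ha by auto. rewrite Rminus_diag, Rabs_R0; lra.
Qed.

Lemma partial_irr N l F j i p t : cont_jet N l F -> ~ coord_ok N l (Some (j, i)) ->
  partial_lim F (Some (j, i)) p t 0.
Proof.
  intros HF Hn. simpl.
  assert (E : (fun y => F (updJ p j i y) t) = (fun _ => F p t)).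
  { extensionality y. apply (cont_dep N l). auto. intros j' i' Hj Hi. unfold updJ.
    destruct (Nat.eqb_spec j' j), (Nat.eqb_spec i' i); simpl; auto. subst. simpl in Hn; tauto. }
  rewrite E. apply derivable_pt_lim_const.
Qed.

Lemma pd_irr N l F j i : cont_jet N l F -> ~ coord_ok N l (Some (j, i)) ->
  pd F (Some (j, i)) = fun _ _ => 0.
Proof. intros; extensionality p; extensionality t; apply pd_eq; eapply partial_irr; eauto. Qed.

Lemma Ck_cont k N l F : Ck k N l F -> cont_jet N l F.
Proof. destruct k; simpl; tauto. Qed.

Lemma Ck_S k N l F : Ck (S k) N l F -> Ck k N l F.
Proof.
  revert F; induction k; intros F H; simpl in *; [tauto|].
  destruct H as [Hc H]. split; auto. intros v Hv. destruct (H v Hv) as [H1 H2]. split; auto.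
Qed.

Lemma Ck_le k k' N l F : (k' <= k)%nat -> Ck k N l F -> Ck k' N l F.
Proof. induction 1; auto. intros; apply IHle, Ck_S; auto. Qed.

Lemma smooth_pd N l F v : smooth N l F -> coord_ok N l v -> smooth N l (pd F v).
Proof. intros H Hv k. destruct (H (S k)) as [_ H2]. apply H2; auto. Qed.

Lemma smooth_ex N l F v p t : smooth N l F -> coord_ok N l v -> exists d, partial_lim F v p t d.
Proof. intros H Hv. destruct (H 1%nat) as [_ H2]. apply H2; auto. Qed.

Lemma partial_const c v p t : partial_lim (fun _ _ => c) v p t 0.
Proof. apply partial_lim_mv. apply derivable_pt_lim_const. Qed.

Lemma pd_const c v : pd (fun _ _ => c) v = fun _ _ => 0.
Proof. extensionality p; extensionality t; apply pd_eq, partial_const. Qed.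

Lemma cont_const N l c : cont_jet N l (fun _ _ => c).
Proof. intros p t e He; exists 1; split; [lra|]. intros; rewrite Rminus_diag, Rabs_R0; lra. Qed.

Lemma Ck_const k N l c : Ck k N l (fun _ _ => c).
Proof.
  revert c; induction k; intros c; simpl; [apply cont_const|]. split; [apply cont_const|].
  intros v _. split; [eauto using partial_const|]. rewrite pd_const. apply IHk.
Qed.

Lemma cont_mono N l F : cont_jet N l F -> cont_jet (S N) l F.
Proof.
  intros H p t e He. destruct (H p t e He) as [d [Hd H2]]. exists d; split; auto.
Qed.

Lemma Ck_mono k N l F : Ck k N l F -> Ck k (S N) l F.
Proof.
  revert F; induction k; intros F H; simpl in *; [apply cont_mono; auto|].
  destruct H as [Hc H]. split; [apply cont_mono; auto|].
  intros [[j i]|] Hv.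
  - destruct (Nat.eq_dec j (S N)).
    + subst. rewrite (pd_irr N l F (S N) i Hc) by (simpl; lia).
      split; [eauto using partial_irr with arith|apply Ck_const].
      intros; exists 0; apply (partial_irr N l); auto; simpl; lia.
    + destruct (H (Some (j, i))) as [H1 H2]; [simpl in *; lia|]. split; auto.
  - destruct (H None) as [H1 H2]; simpl; auto.
Qed.

Lemma Ck_mono_le k N N' l F : (N <= N')%nat -> Ck k N l F -> Ck k N' l F.
Proof. induction 1; auto. intros; apply Ck_mono; auto. Qed.

Lemma partial_plus F G v p t a b : partial_lim F v p t a -> partial_lim G v p t b ->
  partial_lim (fun p t => F p t + G p t) v p t (a + b).
Proof.
  rewrite !partial_lim_mv. intros H1 H2.
  apply (derivable_pt_lim_plus (fun y => F (mvJ p v y) (mvT t v y)) (fun y => G (mvJ p v y) (mvT t v y))); auto.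
Qed.

Lemma partial_mult F G v p t a b : partial_lim F v p t a -> partial_lim G v p t b ->
  partial_lim (fun p t => F p t * G p t) v p t (a * G p t + F p t * b).
Proof.
  rewrite !partial_lim_mv. intros H1 H2.
  pose proof (derivable_pt_lim_mult (fun y => F (mvJ p v y) (mvT t v y)) (fun y => G (mvJ p v y) (mvT t v y)) _ _ _ H1 H2) as H.
  cbv beta in H. rewrite (mvJ_self p t v), (mvT_self p t v) in H.
  exact H.
Qed.

Lemma cont_plus N l F G : cont_jet N l F -> cont_jet N l G -> cont_jet N l (fun p t => F p t + G p t).
Proof.
  intros HF HG p t e He.
  destruct (HF p t (e/2)) as [d1 [Hd1 H1]]; [lra|].
  destruct (HG p t (e/2)) as [d2 [Hd2 H2]]; [lra|].
  exists (Rmin d1 d2); split; [apply Rmin_pos; auto|].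
  intros p' t' Hp Ht.
  assert (A := H1 p' t'). assert (B := H2 p' t').
  assert (Rabs (F p' t' - F p t) < e/2).
  { apply A; [intros; eapply Rlt_le_trans; [apply Hp; auto|apply Rmin_l]|eapply Rlt_le_trans; [apply Ht|apply Rmin_l]]. }
  assert (Rabs (G p' t' - G p t) < e/2).
  { apply B; [intros; eapply Rlt_le_trans; [apply Hp; auto|apply Rmin_r]|eapply Rlt_le_trans; [apply Ht|apply Rmin_r]]. }
  replace (F p' t' + G p' t' - (F p t + G p t)) with ((F p' t' - F p t) + (G p' t' - G p t)) by ring.
  eapply Rle_lt_trans; [apply Rabs_triang|lra].
Qed.

Lemma prod_bound A A0 q g eps : eps > 0 ->
  Rabs (A - A0) < eps / (2 * (Rabs g + 1)) ->
  Rabs (q - g) < Rmin 1 (eps / (2 * (Rabs A0 + 1))) ->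
  Rabs (A * q - A0 * g) < eps.
Proof.
  intros He H1 H2.
  assert (Hg : Rabs g + 1 > 0) by (pose proof (Rabs_pos g); lra).
  assert (HA : Rabs A0 + 1 > 0) by (pose proof (Rabs_pos A0); lra).
  assert (Hq1 : Rabs (q - g) < 1) by (eapply Rlt_le_trans; [apply H2|apply Rmin_l]).
  assert (Hq2 : Rabs (q - g) < eps / (2 * (Rabs A0 + 1))) by (eapply Rlt_le_trans; [apply H2|apply Rmin_r]).
  assert (Hq : Rabs q <= Rabs g + 1).
  { replace q with ((q - g) + g) by ring. eapply Rle_trans; [apply Rabs_triang|lra]. }
  replace (A * q - A0 * g) with ((A - A0) * q + A0 * (q - g)) by ring.
  eapply Rle_lt_trans; [apply Rabs_triang|]. rewrite !Rabs_mult.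
  assert (E1 : Rabs (A - A0) * Rabs q <= eps / 2).
  { apply Rle_trans with (eps / (2 * (Rabs g + 1)) * (Rabs g + 1)).
    - apply Rmult_le_compat; auto using Rabs_pos; lra.
    - right; field; lra. }
  assert (E2 : Rabs A0 * Rabs (q - g) < eps / 2).
  { apply Rle_lt_trans with (Rabs A0 * (eps / (2 * (Rabs A0 + 1)))).
    - apply Rmult_le_compat_l; [apply Rabs_pos|lra].
    - apply Rmult_lt_reg_r with (2 * (Rabs A0 + 1)); [lra|].
      field_simplify; [|lra]. pose proof (Rabs_pos A0). nra. }
  lra.
Qed.

Lemma cont_mult N l F G : cont_jet N l F -> cont_jet N l G -> cont_jet N l (fun p t => F p t * G p t).
Proof.
  intros HF HG p t e He.
  assert (Hg : Rabs (G p t) + 1 > 0) by (pose proof (Rabs_pos (G p t)); lra).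
  assert (HA : Rabs (F p t) + 1 > 0) by (pose proof (Rabs_pos (F p t)); lra).
  destruct (HF p t (e / (2 * (Rabs (G p t) + 1)))) as [d1 [Hd1 H1]].
  { apply Rdiv_lt_0_compat; lra. }
  destruct (HG p t (Rmin 1 (e / (2 * (Rabs (F p t) + 1))))) as [d2 [Hd2 H2]].
  { apply Rmin_pos; [lra|apply Rdiv_lt_0_compat; lra]. }
  exists (Rmin d1 d2); split; [apply Rmin_pos; auto|].
  intros p' t' Hp Ht. apply prod_bound; auto.
  - apply H1; [intros; eapply Rlt_le_trans; [apply Hp; auto|apply Rmin_l]|eapply Rlt_le_trans; [apply Ht|apply Rmin_l]].
  - apply H2; [intros; eapply Rlt_le_trans; [apply Hp; auto|apply Rmin_r]|eapply Rlt_le_trans; [apply Ht|apply Rmin_r]].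
Qed.

Lemma Ck_plus k N l F G : Ck k N l F -> Ck k N l G -> Ck k N l (fun p t => F p t + G p t).
Proof.
  revert F G; induction k; intros F G HF HG; simpl in *; [apply cont_plus; auto|].
  destruct HF as [HFc HF], HG as [HGc HG]. split; [apply cont_plus; auto|].
  intros v Hv. destruct (HF v Hv) as [HF1 HF2], (HG v Hv) as [HG1 HG2].
  assert (E : pd (fun p t => F p t + G p t) v = fun p t => pd F v p t + pd G v p t).
  { extensionality p; extensionality t. apply pd_eq.
    destruct (HF1 p t) as [a Ha], (HG1 p t) as [b Hb].
    rewrite (pd_eq _ _ _ _ _ Ha), (pd_eq _ _ _ _ _ Hb). apply partial_plus; auto. }
  split.
  - intros p t. destruct (HF1 p t) as [a Ha], (HG1 p t) as [b Hb]. eexists; apply partial_plus; eauto.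
  - rewrite E. apply IHk; auto.
Qed.

Lemma Ck_mult k N l F G : Ck k N l F -> Ck k N l G -> Ck k N l (fun p t => F p t * G p t).
Proof.
  revert F G; induction k; intros F G HF HG; [simpl in *; apply cont_mult; auto|].
  pose proof (Ck_S _ _ _ _ HF) as HF'. pose proof (Ck_S _ _ _ _ HG) as HG'.
  simpl in HF, HG |- *.
  destruct HF as [HFc HF], HG as [HGc HG]. split; [apply cont_mult; auto|].
  intros v Hv. destruct (HF v Hv) as [HF1 HF2], (HG v Hv) as [HG1 HG2].
  assert (E : pd (fun p t => F p t * G p t) v = fun p t => pd F v p t * G p t + F p t * pd G v p t).
  { extensionality p; extensionality t. apply pd_eq.
    destruct (HF1 p t) as [a Ha], (HG1 p t) as [b Hb].
    rewrite (pd_eq _ _ _ _ _ Ha), (pd_eq _ _ _ _ _ Hb). apply partial_mult; auto. }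
  split.
  - intros p t. destruct (HF1 p t) as [a Ha], (HG1 p t) as [b Hb]. eexists; apply partial_mult; eauto.
  - rewrite E. apply Ck_plus; apply IHk; auto.
Qed.

Lemma Ck_fsum k N l n (f : nat -> jet -> R -> R) :
  (forall m, (m < n)%nat -> Ck k N l (f m)) -> Ck k N l (fun p t => fsum n (fun m => f m p t)).
Proof.
  induction n; intros H; simpl; [apply Ck_const|].
  apply (Ck_plus k N l (fun p t => fsum n (fun m => f m p t)) (f n)); auto.
Qed.

Lemma partial_proj j i v p t :
  partial_lim (fun p _ => p j i) v p t
    (match v with None => 0 | Some (j', i') => if (Nat.eqb j j' && Nat.eqb i i')%bool then 1 else 0 end).
Proof.
  destruct v as [[j' i']|]; simpl.
  - unfold updJ. destruct (Nat.eqb j j' && Nat.eqb i i')%bool.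
    + apply derivable_pt_lim_id.
    + apply derivable_pt_lim_const.
  - apply derivable_pt_lim_const.
Qed.

Lemma cont_proj N l j i : (j <= N)%nat -> (i < l)%nat -> cont_jet N l (fun p _ => p j i).
Proof. intros Hj Hi p t e He. exists e; split; auto. Qed.

Lemma Ck_proj k N l j i : (j <= N)%nat -> (i < l)%nat -> Ck k N l (fun p _ => p j i).
Proof.
  intros Hj Hi. destruct k; simpl; [apply cont_proj; auto|]. split; [apply cont_proj; auto|].
  intros v Hv. split; [intros; eexists; apply partial_proj|].
  assert (E : pd (fun p _ => p j i) v = fun _ _ =>
    (match v with None => 0 | Some (j', i') => if (Nat.eqb j j' && Nat.eqb i i')%bool then 1 else 0 end)).
  { extensionality p; extensionality t; apply pd_eq, partial_proj. }
  rewrite E. apply Ck_const.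
Qed.

Lemma finmin (n : nat) (P : nat -> R -> Prop) :
  (forall k d d', 0 < d' <= d -> P k d -> P k d') ->
  (forall k, (k < n)%nat -> exists d, d > 0 /\ P k d) ->
  exists d, d > 0 /\ forall k, (k < n)%nat -> P k d.
Proof.
  intros Hm; induction n; intros H.
  - exists 1; split; [lra|intros; lia].
  - destruct IHn as [d1 [Hd1 H1]]; [intros; apply H; lia|].
    destruct (H n) as [d2 [Hd2 H2]]; [lia|].
    exists (Rmin d1 d2); split; [apply Rmin_pos; auto|].
    intros k Hk. destruct (Nat.eq_dec k n).
    + subst. apply (Hm n d2); auto. split; [apply Rmin_pos; auto|apply Rmin_r].
    + apply (Hm k d1); [split; [apply Rmin_pos; auto|apply Rmin_l]|apply H1; lia].
Qed.

Lemma finminC N l (P : coord -> R -> Prop) :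
  (forall c d d', 0 < d' <= d -> P c d -> P c d') ->
  (forall c, coord_ok N l c -> exists d, d > 0 /\ P c d) ->
  exists d, d > 0 /\ forall c, coord_ok N l c -> P c d.
Proof.
  intros Hm H.
  destruct (finmin (S N) (fun j d => forall i, (i < l)%nat -> P (Some (j, i)) d)) as [d1 [Hd1 H1]].
  { intros k d d' Hd Hk i Hi. eapply Hm; eauto. }
  { intros j Hj. apply finmin. intros; eapply Hm; eauto. intros i Hi. apply H. simpl; split; lia. }
  destruct (H None) as [d2 [Hd2 H2]]; [simpl; auto|].
  exists (Rmin d1 d2); split; [apply Rmin_pos; auto|].
  intros [[j i]|] Hc.
  - simpl in Hc. apply (Hm _ d1); [split; [apply Rmin_pos; auto|apply Rmin_l]|apply H1; lia].
  - apply (Hm _ d2); [split; [apply Rmin_pos; auto|apply Rmin_r]|auto].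
Qed.

Lemma cont_getC N l F p t e : cont_jet N l F -> e > 0 -> exists d, d > 0 /\
  forall p' t', (forall c, coord_ok N l c -> Rabs (getC p' t' c - getC p t c) < d) ->
  Rabs (F p' t' - F p t) < e.
Proof.
  intros HF He. destruct (HF p t e He) as [d [Hd H]]. exists d; split; auto.
  intros p' t' Hc. apply H.
  - intros j i Hj Hi. apply (Hc (Some (j, i))). simpl; auto.
  - apply (Hc None). simpl; auto.
Qed.

Lemma cont_dep2 N l F p p' t t' : cont_jet N l F ->
  (forall c, coord_ok N l c -> getC p' t' c = getC p t c) -> F p' t' = F p t.
Proof.
  intros HF H. assert (t' = t) by (apply (H None); simpl; auto). subst.
  apply (cont_dep N l); auto. intros j i Hj Hi. apply (H (Some (j, i))). simpl; auto.
Qed.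

Definition comp (F : jet -> R -> R) (G : jet -> R -> jet) : jet -> R -> R :=
  fun p t => F (G p t) t.
Definition Gc (G : jet -> R -> jet) (j i : nat) : jet -> R -> R := fun p t => G p t j i.

Lemma cont_comp N l1 M l2 F G : cont_jet N l1 F ->
  (forall j i, (j <= N)%nat -> (i < l1)%nat -> cont_jet M l2 (Gc G j i)) ->
  cont_jet M l2 (comp F G).
Proof.
  intros HF HG p t e He.
  destruct (HF (G p t) t e He) as [d1 [Hd1 H1]].
  destruct (finminC M l2 (fun c d => forall j i, (j <= N)%nat -> (i < l1)%nat ->
      forall p' t', (forall c, coord_ok M l2 c -> Rabs (getC p' t' c - getC p t c) < d) ->
      Rabs (G p' t' j i - G p t j i) < d1)) as [d2 [Hd2 H2]].
  { intros c d d' Hd Hc j i Hj Hi p' t' Hp. apply Hc; auto. intros; eapply Rlt_le_trans; [apply Hp; auto|lra]. }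
  { intros c _. destruct (finmin (S N) (fun j d => forall i, (i < l1)%nat ->
      forall p' t', (forall c, coord_ok M l2 c -> Rabs (getC p' t' c - getC p t c) < d) ->
      Rabs (G p' t' j i - G p t j i) < d1)) as [d [Hd Hh]].
    { intros k d d' Hd Hk i Hi p' t' Hp. apply Hk; auto. intros; eapply Rlt_le_trans; [apply Hp; auto|lra]. }
    { intros j Hj. apply finmin.
      - intros k d d' Hd Hk p' t' Hp. apply Hk; auto. intros; eapply Rlt_le_trans; [apply Hp; auto|lra].
      - intros i Hi. apply (cont_getC M l2 (Gc G j i) p t d1); auto. apply HG; lia. }
    exists d; split; auto. intros j i Hj Hi; apply Hh; lia. }
  exists (Rmin d1 d2); split; [apply Rmin_pos; auto|].
  intros p' t' Hp Ht. unfold comp. apply H1.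
  - intros j i Hj Hi. apply (H2 None); simpl; auto.
    intros [[j' i']|] Hc; simpl.
    + eapply Rlt_le_trans; [apply Hp; simpl in Hc; tauto|apply Rmin_r].
    + eapply Rlt_le_trans; [apply Ht|apply Rmin_r].
  - eapply Rlt_le_trans; [apply Ht|apply Rmin_l].
Qed.

Lemma deriv_cont f s0 g : derivable_pt_lim f s0 g ->
  forall e, e > 0 -> exists d, d > 0 /\ forall s, Rabs (s - s0) < d -> Rabs (f s - f s0) < e.
Proof.
  intros H e He. destruct (H 1) as [d Hd]; [lra|].
  assert (Hg : Rabs g + 1 > 0) by (pose proof (Rabs_pos g); lra).
  exists (Rmin d (e / (Rabs g + 1))); split.
  { apply Rmin_pos; [apply cond_pos|apply Rdiv_lt_0_compat; lra]. }
  intros s Hs. destruct (Req_dec s s0) as [->|Hne].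
  { rewrite Rminus_diag, Rabs_R0; lra. }
  assert (Hh : s - s0 <> 0) by lra.
  specialize (Hd (s - s0) Hh). replace (s0 + (s - s0)) with s in Hd by ring.
  assert (Hs1 : Rabs (s - s0) < d) by (eapply Rlt_le_trans; [apply Hs|apply Rmin_l]).
  assert (Hs2 : Rabs (s - s0) < e / (Rabs g + 1)) by (eapply Rlt_le_trans; [apply Hs|apply Rmin_r]).
  specialize (Hd Hs1).
  assert (Hq : Rabs ((f s - f s0) / (s - s0)) <= Rabs g + 1).
  { replace ((f s - f s0) / (s - s0)) with (((f s - f s0) / (s - s0) - g) + g) by ring.
    eapply Rle_trans; [apply Rabs_triang|lra]. }
  replace (f s - f s0) with ((f s - f s0) / (s - s0) * (s - s0)) by (field; auto).
  rewrite Rabs_mult.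
  apply Rle_lt_trans with ((Rabs g + 1) * Rabs (s - s0)).
  - apply Rmult_le_compat_r; auto using Rabs_pos.
  - apply Rmult_lt_reg_r with (/ (Rabs g + 1)).
    + apply Rinv_0_lt_compat; lra.
    + replace ((Rabs g + 1) * Rabs (s - s0) * / (Rabs g + 1)) with (Rabs (s - s0)) by (field; lra).
      unfold Rdiv in Hs2; lra.
Qed.

Lemma MVT_any (f f' : R -> R) a b : (forall y, derivable_pt_lim f y (f' y)) ->
  exists c, f b - f a = f' c * (b - a) /\ Rabs (c - a) <= Rabs (b - a).
Proof.
  intros H. destruct (Rtotal_order a b) as [Hab|[Hab|Hab]].
  - destruct (MVT_cor2 f f' a b Hab) as [c [H1 H2]]; [intros; apply H|].
    exists c; split; auto. rewrite !Rabs_right; lra.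
  - subst. exists b; split; [ring|]. rewrite Rminus_diag, Rabs_R0; lra.
  - destruct (MVT_cor2 f f' b a Hab) as [c [H1 H2]]; [intros; apply H|].
    exists c; split; [lra|]. rewrite !Rabs_left1; lra.
Qed.

Lemma hderiv F c : (forall p t, exists d, partial_lim F c p t d) ->
  forall Q U y, derivable_pt_lim (fun y => F (mvJ Q c y) (mvT U c y)) y (pd F c (mvJ Q c y) (mvT U c y)).
Proof.
  intros H Q U y. destruct (H (mvJ Q c y) (mvT U c y)) as [d Hd].
  rewrite (pd_eq _ _ _ _ _ Hd). apply partial_lim_mv in Hd.
  rewrite getC_mv in Hd. destruct (coord_eqb_spec c c); [|congruence].
  assert (E : (fun y0 => F (mvJ (mvJ Q c y) c y0) (mvT (mvT U c y) c y0)) = (fun y0 => F (mvJ Q c y0) (mvT U c y0))).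
  { extensionality y0. rewrite mvJ_mv, mvT_mv; auto. }
  rewrite E in Hd; auto.
Qed.

Lemma onecoord N l F c (q : R -> jet) (u : R -> R) (x : R -> R) s0 g :
  (forall p t, exists d, partial_lim F c p t d) ->
  cont_jet N l (pd F c) ->
  derivable_pt_lim x s0 g ->
  (forall e, e > 0 -> exists d, d > 0 /\ forall s, Rabs (s - s0) < d -> forall c', coord_ok N l c' ->
      Rabs (getC (q s) (u s) c' - getC (q s0) (u s0) c') < e) ->
  derivable_pt_lim (fun s => F (mvJ (q s) c (x s)) (mvT (u s) c (x s)) - F (mvJ (q s) c (x s0)) (mvT (u s) c (x s0))) s0
    (pd F c (mvJ (q s0) c (x s0)) (mvT (u s0) c (x s0)) * g).
Proof.
  intros HFp HFc Hx Hq eps Heps.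
  set (A0 := pd F c (mvJ (q s0) c (x s0)) (mvT (u s0) c (x s0))).
  assert (Hg : Rabs g + 1 > 0) by (pose proof (Rabs_pos g); lra).
  assert (HA : Rabs A0 + 1 > 0) by (pose proof (Rabs_pos A0); lra).
  destruct (cont_getC N l (pd F c) (mvJ (q s0) c (x s0)) (mvT (u s0) c (x s0)) (eps / (2 * (Rabs g + 1)))) as [dF [HdF HF']]; auto.
  { apply Rdiv_lt_0_compat; lra. }
  destruct (Hq dF HdF) as [d1 [Hd1 Hq1]].
  destruct (deriv_cont x s0 g Hx dF HdF) as [d2 [Hd2 Hx2]].
  destruct (Hx (Rmin 1 (eps / (2 * (Rabs A0 + 1))))) as [d3 Hd3].
  { apply Rmin_pos; [lra|apply Rdiv_lt_0_compat; lra]. }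
  assert (Hpos : 0 < Rmin d1 (Rmin d2 d3)).
  { apply Rmin_pos; auto. apply Rmin_pos; auto. apply cond_pos. }
  exists (mkposreal _ Hpos). intros h Hh0 Hh. simpl in Hh.
  assert (Hh1 : Rabs h < d1) by (eapply Rlt_le_trans; [apply Hh|apply Rmin_l]).
  assert (Hh2 : Rabs h < d2) by (eapply Rlt_le_trans; [apply Hh|eapply Rle_trans; [apply Rmin_r|apply Rmin_l]]).
  assert (Hh3 : Rabs h < d3) by (eapply Rlt_le_trans; [apply Hh|eapply Rle_trans; [apply Rmin_r|apply Rmin_r]]).
  destruct (MVT_any (fun y => F (mvJ (q (s0 + h)) c y) (mvT (u (s0 + h)) c y))
     (fun y => pd F c (mvJ (q (s0 + h)) c y) (mvT (u (s0 + h)) c y)) (x s0) (x (s0 + h))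
     (hderiv F c HFp (q (s0 + h)) (u (s0 + h)))) as [xi [E Hxi]].
  cbv beta in E |- *.
  rewrite E. rewrite Rminus_diag, Rminus_0_r.
  replace (pd F c (mvJ (q (s0 + h)) c xi) (mvT (u (s0 + h)) c xi) * (x (s0 + h) - x s0) / h)
    with (pd F c (mvJ (q (s0 + h)) c xi) (mvT (u (s0 + h)) c xi) * ((x (s0 + h) - x s0) / h)) by (field; auto).
  apply prod_bound; auto.
  - apply HF'. intros c' Hc'. rewrite !getC_mv. destruct (coord_eqb c' c).
    + eapply Rle_lt_trans; [apply Hxi|]. apply Hx2. replace (s0 + h - s0) with h by ring; auto.
    + apply Hq1; auto. replace (s0 + h - s0) with h by ring; auto.
Qed.

Definition sumL (L : list coord) (f : coord -> R) : R := fold_right (fun c acc => f c + acc) 0 L.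

Lemma coords_cont N l (ga : R -> jet) ta s0 g' L :
  (forall c, In c L -> derivable_pt_lim (fun s => getC (ga s) (ta s) c) s0 (g' c)) ->
  (forall c, coord_ok N l c -> ~ In c L -> forall s, getC (ga s) (ta s) c = getC (ga s0) (ta s0) c) ->
  forall e, e > 0 -> exists d, d > 0 /\ forall s, Rabs (s - s0) < d -> forall c', coord_ok N l c' ->
      Rabs (getC (ga s) (ta s) c' - getC (ga s0) (ta s0) c') < e.
Proof.
  intros Hd Hk e He.
  destruct (finminC N l (fun c d => forall s, Rabs (s - s0) < d ->
      Rabs (getC (ga s) (ta s) c - getC (ga s0) (ta s0) c) < e)) as [d [Hd0 H]].
  { intros c d d' Hdd H s Hs. apply H; lra. }
  { intros c Hc. destruct (classic (In c L)) as [Hin|Hin].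
    - apply (deriv_cont (fun s => getC (ga s) (ta s) c) s0 (g' c)); auto.
    - exists 1; split; [lra|]. intros s _. rewrite Hk; auto. rewrite Rminus_diag, Rabs_R0; lra. }
  exists d; split; auto.
Qed.

Lemma chain_aux N l F (ga : R -> jet) (ta : R -> R) s0 (g' : coord -> R) L :
  cont_jet N l F ->
  (forall c, coord_ok N l c -> forall p t, exists d, partial_lim F c p t d) ->
  (forall c, coord_ok N l c -> cont_jet N l (pd F c)) ->
  (forall c, In c L -> coord_ok N l c) -> NoDup L ->
  (forall c, In c L -> derivable_pt_lim (fun s => getC (ga s) (ta s) c) s0 (g' c)) ->
  (forall c, coord_ok N l c -> ~ In c L -> forall s, getC (ga s) (ta s) c = getC (ga s0) (ta s0) c) ->
  derivable_pt_lim (fun s => F (ga s) (ta s)) s0 (sumL L (fun c => pd F c (ga s0) (ta s0) * g' c)).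
Proof.
  intros HF HFp HFc. revert ga ta. induction L as [|c L IH]; intros ga ta HL ND Hd Hk.
  - assert (E : (fun s => F (ga s) (ta s)) = (fun _ => F (ga s0) (ta s0))).
    { extensionality s. apply (cont_dep2 N l); auto. }
    rewrite E. simpl. apply derivable_pt_lim_const.
  - inversion ND as [|? ? Hnin ND']; subst.
    set (x0 := getC (ga s0) (ta s0) c).
    set (ga' := fun s => mvJ (ga s) c x0). set (ta' := fun s => mvT (ta s) c x0).
    assert (Hd' : forall c', In c' L -> derivable_pt_lim (fun s => getC (ga' s) (ta' s) c') s0 (g' c')).
    { intros c' Hc'. assert (E : (fun s => getC (ga' s) (ta' s) c') = (fun s => getC (ga s) (ta s) c')).
      { extensionality s. unfold ga', ta'. rewrite getC_mv. destruct (coord_eqb_spec c' c); auto. subst; tauto. }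
      rewrite E. apply Hd. right; auto. }
    assert (Hk' : forall c', coord_ok N l c' -> ~ In c' L -> forall s, getC (ga' s) (ta' s) c' = getC (ga' s0) (ta' s0) c').
    { intros c' Hc' Hn s. unfold ga', ta'. rewrite !getC_mv. destruct (coord_eqb_spec c' c); auto.
      apply Hk; auto. intros [H|H]; [congruence|tauto]. }
    assert (HL' : forall c', In c' L -> coord_ok N l c') by (intros; apply HL; right; auto).
    pose proof (IH ga' ta' HL' ND' Hd' Hk') as HIH.
    assert (E0J : ga' s0 = ga s0) by (unfold ga', x0; apply mvJ_self).
    assert (E0T : ta' s0 = ta s0) by (unfold ta', x0; apply mvT_self).
    rewrite E0J, E0T in HIH.
    assert (Hcore := onecoord N l F c ga' ta' (fun s => getC (ga s) (ta s) c) s0 (g' c)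
       (HFp c (HL c (or_introl eq_refl))) (HFc c (HL c (or_introl eq_refl)))
       (Hd c (or_introl eq_refl)) (coords_cont N l ga' ta' s0 g' L Hd' Hk')).
    cbv beta in Hcore. fold x0 in Hcore.
    assert (E1 : forall s, mvJ (ga' s) c (getC (ga s) (ta s) c) = ga s)
      by (intros; unfold ga'; rewrite mvJ_mv; apply mvJ_self).
    assert (E2 : forall s, mvT (ta' s) c (getC (ga s) (ta s) c) = ta s)
      by (intros; unfold ta'; rewrite mvT_mv; eapply mvT_self).
    assert (E3 : forall s, mvJ (ga' s) c x0 = ga' s) by (intros; unfold ga'; apply mvJ_mv).
    assert (E4 : forall s, mvT (ta' s) c x0 = ta' s) by (intros; unfold ta'; apply mvT_mv).
    assert (Ef : (fun s => F (mvJ (ga' s) c (getC (ga s) (ta s) c)) (mvT (ta' s) c (getC (ga s) (ta s) c)) -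
                          F (mvJ (ga' s) c x0) (mvT (ta' s) c x0)) =
                 (fun s => F (ga s) (ta s) - F (ga' s) (ta' s))).
    { extensionality s. rewrite E1, E2, E3, E4. auto. }
    rewrite Ef, E3, E4, E0J, E0T in Hcore.
    assert (Hsum := derivable_pt_lim_plus _ _ _ _ _ Hcore HIH).
    unfold plus_fct in Hsum; cbv beta in Hsum.
    assert (Ef2 : (fun s => F (ga s) (ta s) - F (ga' s) (ta' s) + F (ga' s) (ta' s))
                 = (fun s => F (ga s) (ta s))).
    { extensionality s. ring. }
    rewrite Ef2 in Hsum. simpl. exact Hsum.
Qed.

Fixpoint jlist (n l : nat) : list coord :=
  match n with O => nil | S m => jlist m l ++ map (fun i => Some (m, i)) (seq 0 l) end.

Lemma in_jlist n l c : In c (jlist n l) <-> exists j i, c = Some (j, i) /\ (j < n)%nat /\ (i < l)%nat.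
Proof.
  induction n; simpl.
  - split; [tauto|intros (j & i & _ & H & _); lia].
  - rewrite in_app_iff, IHn, in_map_iff. split.
    + intros [(j & i & -> & H1 & H2)|(i & <- & Hi)].
      * exists j, i; repeat split; lia.
      * apply in_seq in Hi. exists n, i; repeat split; lia.
    + intros (j & i & -> & H1 & H2). destruct (Nat.eq_dec j n).
      * right. subst. exists i; split; auto. apply in_seq; lia.
      * left. exists j, i; repeat split; lia.
Qed.

Lemma nodup_jlist n l : NoDup (jlist n l).
Proof.
  induction n; simpl; [constructor|].
  apply NoDup_app; auto.
  - apply NoDup_map_NoDup_ForallPairs; [|apply seq_NoDup].
    intros x y _ _ H; congruence.
  - intros a Ha Hb. apply in_jlist in Ha. destruct Ha as (j & i & -> & H1 & _).
    apply in_map_iff in Hb. destruct Hb as (i' & E & _). inversion E; lia.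
Qed.

Definition clist N l := None :: jlist (S N) l.

Lemma in_clist N l c : In c (clist N l) <-> coord_ok N l c.
Proof.
  unfold clist. change (In c (None :: jlist (S N) l)) with (None = c \/ In c (jlist (S N) l)). rewrite in_jlist. destruct c as [[j i]|]; simpl.
  - split; [intros [H|(j' & i' & E & H1 & H2)]; [congruence|inversion E; subst; split; lia]|].
    intros [H1 H2]. right. exists j, i; repeat split; lia.
  - split; auto.
Qed.

Lemma nodup_clist N l : NoDup (clist N l).
Proof.
  constructor; [|apply nodup_jlist]. intros H. apply in_jlist in H.
  destruct H as (j & i & E & _); discriminate.
Qed.

Lemma sumL_app l1 l2 f : sumL (l1 ++ l2) f = sumL l1 f + sumL l2 f.
Proof. induction l1; simpl; [ring|rewrite IHl1; ring]. Qed.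

Lemma sumL_jlist n l f : sumL (jlist n l) f = fsum n (fun j => fsum l (fun i => f (Some (j, i)))).
Proof.
  induction n; simpl; auto. rewrite sumL_app, IHn. f_equal.
  clear IHn. induction l; auto.
  rewrite seq_S, map_app, sumL_app, IHl. simpl. ring.
Qed.

Lemma sumL_clist N l f : sumL (clist N l) f = f None + fsum (S N) (fun j => fsum l (fun i => f (Some (j, i)))).
Proof. unfold clist. change (sumL (None :: jlist (S N) l) f) with (f None + sumL (jlist (S N) l) f).
  rewrite sumL_jlist; reflexivity. Qed.

Lemma chain N l F (ga : R -> jet) (ta : R -> R) s0 (g' : coord -> R) :
  cont_jet N l F ->
  (forall c, coord_ok N l c -> forall p t, exists d, partial_lim F c p t d) ->
  (forall c, coord_ok N l c -> cont_jet N l (pd F c)) ->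
  (forall c, coord_ok N l c -> derivable_pt_lim (fun s => getC (ga s) (ta s) c) s0 (g' c)) ->
  derivable_pt_lim (fun s => F (ga s) (ta s)) s0
    (pd F None (ga s0) (ta s0) * g' None +
     fsum (S N) (fun j => fsum l (fun i => pd F (Some (j, i)) (ga s0) (ta s0) * g' (Some (j, i))))).
Proof.
  intros HF HFp HFc Hd.
  pose proof (chain_aux N l F ga ta s0 g' (clist N l) HF HFp HFc) as H.
  rewrite sumL_clist in H. apply H.
  - intros c Hc; apply in_clist; auto.
  - apply nodup_clist.
  - intros c Hc; apply Hd, in_clist; auto.
  - intros c Hc Hn. exfalso; apply Hn, in_clist; auto.
Qed.

Definition dT (v : coord) : R := match v with None => 1 | Some _ => 0 end.

Lemma partial_comp N l1 F G v p t :
  cont_jet N l1 F ->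
  (forall c, coord_ok N l1 c -> forall p t, exists d, partial_lim F c p t d) ->
  (forall c, coord_ok N l1 c -> cont_jet N l1 (pd F c)) ->
  (forall j i, (j <= N)%nat -> (i < l1)%nat -> forall p t, exists d, partial_lim (Gc G j i) v p t d) ->
  partial_lim (comp F G) v p t
    (pd F None (G p t) t * dT v +
     fsum (S N) (fun j => fsum l1 (fun i => pd F (Some (j, i)) (G p t) t * pd (Gc G j i) v p t))).
Proof.
  intros HF HFp HFc HG. apply partial_lim_mv. unfold comp.
  pose proof (chain N l1 F (fun y => G (mvJ p v y) (mvT t v y)) (fun y => mvT t v y) (getC p t v)
     (fun c => match c with None => dT v | Some (j, i) => pd (Gc G j i) v p t end) HF HFp HFc) as H.
  cbv beta in H. rewrite (mvJ_self p t v), (mvT_self p t v) in H. apply H.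
  intros [[j i]|] Hc; simpl.
  - simpl in Hc. destruct (HG j i (proj1 Hc) (proj2 Hc) p t) as [d Hd].
    rewrite (pd_eq _ _ _ _ _ Hd). apply partial_lim_mv in Hd. exact Hd.
  - destruct v as [[j i]|]; simpl; [apply derivable_pt_lim_const|apply derivable_pt_lim_id].
Qed.

Lemma Ck_parts k N l F : Ck (S k) N l F ->
  cont_jet N l F /\
  (forall c, coord_ok N l c -> forall p t, exists d, partial_lim F c p t d) /\
  (forall c, coord_ok N l c -> Ck k N l (pd F c)).
Proof.
  simpl. intros [Hc H]. split; auto. split; intros c Hv; destruct (H c Hv); auto.
Qed.

Lemma Ck_comp k : forall N l1 M l2 F G, Ck k N l1 F ->
  (forall j i, (j <= N)%nat -> (i < l1)%nat -> Ck k M l2 (Gc G j i)) -> Ck k M l2 (comp F G).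
Proof.
  induction k; intros N l1 M l2 F G HF HG.
  - simpl in *. apply (cont_comp N l1); auto.
  - destruct (Ck_parts _ _ _ _ HF) as [HFc [HFp HFk]].
    simpl. split.
    + apply (cont_comp N l1); auto. intros; apply (Ck_cont (S k)); auto.
    + intros v Hv.
      assert (HGp : forall j i, (j <= N)%nat -> (i < l1)%nat -> forall p t, exists d, partial_lim (Gc G j i) v p t d).
      { intros j i Hj Hi. destruct (Ck_parts _ _ _ _ (HG j i Hj Hi)) as [_ [H _]]. apply H; auto. }
      assert (HFc' : forall c, coord_ok N l1 c -> cont_jet N l1 (pd F c)).
      { intros c Hc. apply (Ck_cont k). auto. }
      assert (E : pd (comp F G) v = fun p t =>
        comp (pd F None) G p t * dT v +
        fsum (S N) (fun j => fsum l1 (fun i => comp (pd F (Some (j, i))) G p t * pd (Gc G j i) v p t))).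
      { extensionality p; extensionality t. apply pd_eq. apply partial_comp; auto. }
      split.
      * intros p t. eexists. apply (partial_comp N l1); auto.
      * rewrite E.
        apply (Ck_plus k M l2 (fun p t => comp (pd F None) G p t * dT v)).
        { apply (Ck_mult k M l2 (comp (pd F None) G) (fun _ _ => dT v)); [|apply Ck_const].
          apply (IHk N l1); [apply HFk; simpl; auto|]. intros; apply Ck_S; auto. }
        apply (Ck_fsum k M l2 (S N) (fun j p t => fsum l1 (fun i => comp (pd F (Some (j, i))) G p t * pd (Gc G j i) v p t))).
        intros j Hj.
        apply (Ck_fsum k M l2 l1 (fun i p t => comp (pd F (Some (j, i))) G p t * pd (Gc G j i) v p t)).
        intros i Hi.
        apply (Ck_mult k M l2 (comp (pd F (Some (j, i))) G) (pd (Gc G j i) v)).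
        { apply (IHk N l1); [apply HFk; simpl; split; lia|]. intros; apply Ck_S; auto. }
        { destruct (Ck_parts _ _ _ _ (HG j i ltac:(lia) Hi)) as [_ [_ H]]. apply H; auto. }
Qed.

Lemma smooth_comp N l1 M l2 F G : smooth N l1 F ->
  (forall j i, (j <= N)%nat -> (i < l1)%nat -> smooth M l2 (Gc G j i)) -> smooth M l2 (comp F G).
Proof. intros HF HG k. apply (Ck_comp k N l1); auto. intros; apply HG; auto. Qed.

Definition Hp (k l : nat) (F : jet -> R -> R) :=
  forall c, coord_ok k l c -> forall p t, exists d, partial_lim F c p t d.

Lemma smooth_Hp N k l F : smooth N l F -> Hp k l F.
Proof.
  intros H [[j i]|] Hc p t.
  - destruct (classic (coord_ok N l (Some (j, i)))) as [Hc'|Hc'].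
    + apply (smooth_ex N l); auto.
    + exists 0. apply (partial_irr N l); auto. apply (Ck_cont 0), H.
  - apply (smooth_ex N l); simpl; auto.
Qed.

Lemma Dt_order N k l F : cont_jet N l F -> (N <= k)%nat -> forall p t, Dt l k F p t = Dt l N F p t.
Proof.
  intros HF Hk p t. induction Hk; auto. rewrite <- IHHk. unfold Dt.
  change (fsum (S (S m)) ?f) with (fsum (S m) f + f (S m)). cbv beta.
  rewrite (fsum_zero l (fun i => pd F (Some (S m, i)) p t * p (S (S m)) i)); [ring|].
  intros i Hi. rewrite (pd_irr N l F (S m) i HF); [ring|simpl; lia].
Qed.

Lemma smooth_Dt N l F : smooth N l F -> smooth (S N) l (Dt l N F).
Proof.
  intros H k. unfold Dt.
  apply (Ck_plus k (S N) l (pd F None)).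
  { apply Ck_mono, smooth_pd; simpl; auto. }
  apply (Ck_fsum k (S N) l (S N) (fun j p t => fsum l (fun i => pd F (Some (j, i)) p t * p (S j) i))).
  intros j Hj. apply (Ck_fsum k (S N) l l (fun i p t => pd F (Some (j, i)) p t * p (S j) i)).
  intros i Hi. apply (Ck_mult k (S N) l (pd F (Some (j, i))) (fun p _ => p (S j) i)).
  - apply Ck_mono, smooth_pd; auto. simpl; split; lia.
  - apply Ck_proj; lia.
Qed.

Lemma smooth_Dn l F j : smooth 0 l F -> smooth j l (Dn l j F).
Proof. induction j; simpl; auto. intros H. apply smooth_Dt; auto. Qed.

Lemma pd_plus_eq F G v p t : (exists a, partial_lim F v p t a) -> (exists b, partial_lim G v p t b) ->
  pd (fun p t => F p t + G p t) v p t = pd F v p t + pd G v p t.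
Proof.
  intros [a Ha] [b Hb]. rewrite (pd_eq _ _ _ _ _ Ha), (pd_eq _ _ _ _ _ Hb). apply pd_eq, partial_plus; auto.
Qed.

Lemma pd_mult_eq F G v p t : (exists a, partial_lim F v p t a) -> (exists b, partial_lim G v p t b) ->
  pd (fun p t => F p t * G p t) v p t = pd F v p t * G p t + F p t * pd G v p t.
Proof.
  intros [a Ha] [b Hb]. rewrite (pd_eq _ _ _ _ _ Ha), (pd_eq _ _ _ _ _ Hb). apply pd_eq, partial_mult; auto.
Qed.

Lemma Hp_plus k l F G : Hp k l F -> Hp k l G -> Hp k l (fun p t => F p t + G p t).
Proof.
  intros HF HG c Hc p t. destruct (HF c Hc p t) as [a Ha], (HG c Hc p t) as [b Hb].
  eexists; apply partial_plus; eauto.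
Qed.

Lemma Hp_mult k l F G : Hp k l F -> Hp k l G -> Hp k l (fun p t => F p t * G p t).
Proof.
  intros HF HG c Hc p t. destruct (HF c Hc p t) as [a Ha], (HG c Hc p t) as [b Hb].
  eexists; apply partial_mult; eauto.
Qed.

Lemma Hp_const k l c : Hp k l (fun _ _ => c).
Proof. intros v _ p t; eexists; apply partial_const. Qed.

Lemma Hp_fsum k l n (f : nat -> jet -> R -> R) :
  (forall m, (m < n)%nat -> Hp k l (f m)) -> Hp k l (fun p t => fsum n (fun m => f m p t)).
Proof.
  induction n; intros H; simpl; [apply Hp_const|].
  apply (Hp_plus k l (fun p t => fsum n (fun m => f m p t)) (f n)); auto.
Qed.

Lemma Dt_plus k l F G p t : Hp k l F -> Hp k l G ->
  Dt l k (fun p t => F p t + G p t) p t = Dt l k F p t + Dt l k G p t.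
Proof.
  intros HF HG. unfold Dt.
  rewrite pd_plus_eq by (apply HF || apply HG; simpl; auto).
  rewrite (fsum_ext (S k) _ (fun j => fsum l (fun i => pd F (Some (j, i)) p t * p (S j) i) +
                                   fsum l (fun i => pd G (Some (j, i)) p t * p (S j) i))).
  { rewrite fsum_plus; ring. }
  intros j Hj. rewrite <- fsum_plus. apply fsum_ext. intros i Hi.
  rewrite pd_plus_eq by (apply HF || apply HG; simpl; split; lia). ring.
Qed.

Lemma Dt_mult k l F G p t : Hp k l F -> Hp k l G ->
  Dt l k (fun p t => F p t * G p t) p t = Dt l k F p t * G p t + F p t * Dt l k G p t.
Proof.
  intros HF HG. unfold Dt.
  rewrite pd_mult_eq by (apply HF || apply HG; simpl; auto).
  rewrite (fsum_ext (S k) _ (fun j => fsum l (fun i => pd F (Some (j, i)) p t * p (S j) i) * G p t +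
                                   F p t * fsum l (fun i => pd G (Some (j, i)) p t * p (S j) i))).
  { rewrite fsum_plus, fsum_scal, fsum_scalr; ring. }
  intros j Hj. rewrite <- fsum_scal, <- fsum_scalr, <- fsum_plus. apply fsum_ext. intros i Hi.
  rewrite pd_mult_eq by (apply HF || apply HG; simpl; split; lia). ring.
Qed.

Lemma Dt_const k l c p t : Dt l k (fun _ _ => c) p t = 0.
Proof.
  unfold Dt. rewrite pd_const. rewrite fsum_zero; [ring|]. intros j _.
  rewrite fsum_zero; auto. intros i _. rewrite pd_const. ring.
Qed.

Lemma Dt_fsum k l n (f : nat -> jet -> R -> R) p t :
  (forall m, (m < n)%nat -> Hp k l (f m)) ->
  Dt l k (fun p t => fsum n (fun m => f m p t)) p t = fsum n (fun m => Dt l k (f m) p t).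
Proof.
  induction n; intros H; simpl; [apply Dt_const|].
  rewrite (Dt_plus k l (fun p t => fsum n (fun m => f m p t)) (f n)).
  - rewrite IHn; auto.
  - apply Hp_fsum; auto.
  - apply H; lia.
Qed.

Lemma Dt_ext l k F G p t : (forall p t, F p t = G p t) -> Dt l k F p t = Dt l k G p t.
Proof. intros H. assert (F = G) by (extensionality a; extensionality b; auto). subst; auto. Qed.

Lemma fsum_ext' n f g : (forall k, f k = g k) -> fsum n f = fsum n g.
Proof. intros; apply fsum_ext; auto. Qed.

Lemma swap4 n1 n2 n3 n4 (f : nat -> nat -> nat -> nat -> R) :
  fsum n1 (fun k => fsum n2 (fun a => fsum n3 (fun j => fsum n4 (fun i => f k a j i)))) =
  fsum n3 (fun j => fsum n4 (fun i => fsum n1 (fun k => fsum n2 (fun a => f k a j i)))).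
Proof.
  transitivity (fsum n1 (fun k => fsum n3 (fun j => fsum n2 (fun a => fsum n4 (fun i => f k a j i))))).
  { apply fsum_ext'; intros k. apply (fsum_swap n2 n3 (fun a j => fsum n4 (fun i => f k a j i))). }
  rewrite (fsum_swap n1 n3 (fun k j => fsum n2 (fun a => fsum n4 (fun i => f k a j i)))).
  apply fsum_ext'; intros j.
  transitivity (fsum n1 (fun k => fsum n4 (fun i => fsum n2 (fun a => f k a j i)))).
  { apply fsum_ext'; intros k. apply (fsum_swap n2 n4 (fun a i => f k a j i)). }
  apply (fsum_swap n1 n4 (fun k i => fsum n2 (fun a => f k a j i))).
Qed.

Lemma alg4 n m X0 (X Y0 : nat -> nat -> R) (Y : nat -> nat -> nat -> nat -> R) (x : nat -> nat -> R) :
  (X0 * 1 + fsum n (fun j => fsum m (fun i => X j i * Y0 j i))) +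
  fsum n (fun k => fsum m (fun a => (X0 * 0 + fsum n (fun j => fsum m (fun i => X j i * Y j i k a))) * x k a))
  = X0 + fsum n (fun j => fsum m (fun i => X j i * (Y0 j i + fsum n (fun k => fsum m (fun a => Y j i k a * x k a))))).
Proof.
  rewrite (fsum_ext' n (fun j => fsum m (fun i => X j i * (Y0 j i + fsum n (fun k => fsum m (fun a => Y j i k a * x k a)))))
     (fun j => fsum m (fun i => X j i * Y0 j i) + fsum m (fun i => fsum n (fun k => fsum m (fun a => X j i * Y j i k a * x k a))))).
  2:{ intros j. rewrite <- fsum_plus. apply fsum_ext'; intros i.
      rewrite Rmult_plus_distr_l. f_equal. rewrite <- fsum_scal. apply fsum_ext'; intros k.
      rewrite <- fsum_scal. apply fsum_ext'; intros a. ring. }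
  rewrite fsum_plus.
  rewrite (fsum_ext' n (fun k => fsum m (fun a => (X0 * 0 + fsum n (fun j => fsum m (fun i => X j i * Y j i k a))) * x k a))
     (fun k => fsum m (fun a => fsum n (fun j => fsum m (fun i => X j i * Y j i k a * x k a))))).
  2:{ intros k. apply fsum_ext'; intros a. rewrite Rmult_0_r, Rplus_0_l, <- fsum_scalr.
      apply fsum_ext'; intros j. rewrite <- fsum_scalr. apply fsum_ext'; intros i. ring. }
  rewrite (swap4 n m n m (fun k a j i => X j i * Y j i k a * x k a)). ring.
Qed.

Lemma Dt_comp N l F G p t :
  smooth N l F ->
  (forall j i, (j <= N)%nat -> (i < l)%nat -> smooth N l (Gc G j i)) ->
  (forall j i, (j <= N)%nat -> (i < l)%nat -> forall p t, Dt l N (Gc G j i) p t = G p t (S j) i) ->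
  Dt l N (comp F G) p t = comp (Dt l N F) G p t.
Proof.
  intros HF HG HD.
  assert (HFc : cont_jet N l F) by apply (HF 0%nat).
  assert (HFp : forall c, coord_ok N l c -> forall p t, exists d, partial_lim F c p t d).
  { intros c Hc p' t'. apply (smooth_ex N l); auto. }
  assert (HFc' : forall c, coord_ok N l c -> cont_jet N l (pd F c)).
  { intros c Hc. apply (smooth_pd N l F c HF Hc 0%nat). }
  assert (HGp : forall v, coord_ok N l v -> forall j i, (j <= N)%nat -> (i < l)%nat ->
     forall p t, exists d, partial_lim (Gc G j i) v p t d).
  { intros v Hv j i Hj Hi p' t'. apply (smooth_ex N l); auto. }
  set (PC := fun v => pd F None (G p t) t * dT v +
     fsum (S N) (fun j => fsum l (fun i => pd F (Some (j, i)) (G p t) t * pd (Gc G j i) v p t))).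
  assert (HPC : forall v, coord_ok N l v -> pd (comp F G) v p t = PC v).
  { intros v Hv. apply pd_eq. apply partial_comp; auto. }
  unfold Dt at 1. rewrite HPC by (simpl; auto).
  rewrite (fsum_ext (S N) _ (fun k => fsum l (fun a => PC (Some (k, a)) * p (S k) a))).
  2:{ intros k Hk. apply fsum_ext. intros a Ha. rewrite HPC; auto. simpl; split; lia. }
  unfold comp, Dt.
  rewrite (fsum_ext (S N) (fun j => fsum l (fun i => pd F (Some (j, i)) (G p t) t * G p t (S j) i))
     (fun j => fsum l (fun i => pd F (Some (j, i)) (G p t) t *
        (pd (Gc G j i) None p t + fsum (S N) (fun k => fsum l (fun a => pd (Gc G j i) (Some (k, a)) p t * p (S k) a)))))).
  2:{ intros j Hj. apply fsum_ext. intros i Hi. rewrite <- HD by lia. reflexivity. }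
  unfold PC. simpl dT.
  apply (alg4 (S N) l (pd F None (G p t) t) (fun j i => pd F (Some (j, i)) (G p t) t)
     (fun j i => pd (Gc G j i) None p t) (fun j i k a => pd (Gc G j i) (Some (k, a)) p t) (fun k a => p (S k) a)).
Qed.

Module SchwarzM.
Import Coquelicot.Coquelicot.

Lemma Derive_pd G c Q U y : (forall p t, exists d, partial_lim G c p t d) ->
  Derive (fun z => G (mvJ Q c z) (mvT U c z)) y = pd G c (mvJ Q c y) (mvT U c y).
Proof. intros H. apply is_derive_unique. apply is_derive_Reals. apply hderiv; auto. Qed.

Lemma ex_derive_pd G c Q U y : (forall p t, exists d, partial_lim G c p t d) ->
  ex_derive (fun z => G (mvJ Q c z) (mvT U c z)) y.
Proof. intros H. eexists. apply is_derive_Reals. apply hderiv; auto. Qed.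

Lemma mvJ_comm p u v x y : u <> v -> mvJ (mvJ p u x) v y = mvJ (mvJ p v y) u x.
Proof.
  intros Huv. destruct u as [[j i]|], v as [[j' i']|]; simpl; auto.
  extensionality a; extensionality b. unfold updJ.
  destruct (Nat.eqb_spec a j'), (Nat.eqb_spec b i'), (Nat.eqb_spec a j), (Nat.eqb_spec b i); simpl; auto.
  subst. congruence.
Qed.

Lemma mvT_comm t u v x y : u <> v -> mvT (mvT t u x) v y = mvT (mvT t v y) u x.
Proof. intros Huv. destruct u as [[j i]|], v as [[j' i']|]; simpl; auto. congruence. Qed.

Lemma pd_swap N l F v u p t : smooth N l F -> coord_ok N l v -> coord_ok N l u -> u <> v ->
  pd (pd F v) u p t = pd (pd F u) v p t.
Proof.
  intros HF Hv Hu Huv.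
  set (P := fun x y => mvJ (mvJ p u x) v y). set (T := fun x y => mvT (mvT t u x) v y).
  assert (HA : forall G, (forall p t, exists d, partial_lim G v p t d) -> forall x y,
     Derive (fun z => G (P x z) (T x z)) y = pd G v (P x y) (T x y)).
  { intros G HG x y. unfold P, T. apply Derive_pd; auto. }
  assert (HA' : forall G, (forall p t, exists d, partial_lim G v p t d) -> forall x y,
     ex_derive (fun z => G (P x z) (T x z)) y).
  { intros G HG x y. unfold P, T. apply ex_derive_pd; auto. }
  assert (EC : forall x y, P x y = mvJ (mvJ p v y) u x) by (intros; unfold P; apply mvJ_comm; auto).
  assert (ET : forall x y, T x y = mvT (mvT t v y) u x) by (intros; unfold T; apply mvT_comm; auto).
  assert (HB : forall G, (forall p t, exists d, partial_lim G u p t d) -> forall x y,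
     Derive (fun z => G (P z y) (T z y)) x = pd G u (P x y) (T x y)).
  { intros G HG x y.
    assert (E : (fun z => G (P z y) (T z y)) = (fun z => G (mvJ (mvJ p v y) u z) (mvT (mvT t v y) u z))).
    { extensionality z. rewrite EC, ET; auto. }
    rewrite E, Derive_pd by auto. rewrite EC, ET; auto. }
  assert (HB' : forall G, (forall p t, exists d, partial_lim G u p t d) -> forall x y,
     ex_derive (fun z => G (P z y) (T z y)) x).
  { intros G HG x y.
    apply (ex_derive_ext (fun z => G (mvJ (mvJ p v y) u z) (mvT (mvT t v y) u z))).
    { intros z. rewrite EC, ET; auto. }
    apply ex_derive_pd; auto. }
  assert (HFv : forall p t, exists d, partial_lim F v p t d) by (intros; apply (smooth_ex N l); auto).
  assert (HFu : forall p t, exists d, partial_lim F u p t d) by (intros; apply (smooth_ex N l); auto).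
  assert (HFvu : forall p t, exists d, partial_lim (pd F v) u p t d)
    by (intros; apply (smooth_ex N l); auto; apply smooth_pd; auto).
  assert (HFuv : forall p t, exists d, partial_lim (pd F u) v p t d)
    by (intros; apply (smooth_ex N l); auto; apply smooth_pd; auto).
  set (f := fun x y => F (P x y) (T x y)).
  assert (E1 : forall b, (fun z => Derive (fun t => f z t) b) = (fun z => pd F v (P z b) (T z b))).
  { intros b; extensionality z. unfold f. apply HA; auto. }
  assert (E2 : forall a, (fun z => Derive (fun t => f t z) a) = (fun z => pd F u (P a z) (T a z))).
  { intros a; extensionality z. unfold f. apply HB; auto. }
  assert (C1 : forall H, cont_jet N l H -> forall x0 y0, x0 = getC p t u -> y0 = getC p t v ->
     continuity_2d_pt (fun a b => H (P a b) (T a b)) x0 y0).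
  { intros H HH x0 y0 Hx Hy eps.
    destruct (cont_getC N l H (P x0 y0) (T x0 y0) eps) as [d [Hd Hc]]; auto. apply cond_pos.
    exists (mkposreal d Hd). intros a b Ha Hb. simpl in Ha, Hb. apply Hc.
    intros c Hc'. unfold P, T. rewrite !getC_mv.
    destruct (coord_eqb c v); auto; destruct (coord_eqb c u); auto; rewrite Rminus_diag, Rabs_R0; auto. }
  assert (Hs := Schwarz f (getC p t u) (getC p t v)).
  rewrite E1, E2 in Hs.
  rewrite (HB (pd F v) HFvu), (HA (pd F u) HFuv) in Hs.
  assert (EP : P (getC p t u) (getC p t v) = p).
  { unfold P. rewrite mvJ_self. rewrite (mvJ_self p t v). auto. }
  assert (ET0 : T (getC p t u) (getC p t v) = t).
  { unfold T. rewrite (mvT_self p t u). apply (mvT_self p t v). }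
  rewrite EP, ET0 in Hs. apply Hs.
  - exists (mkposreal 1 Rlt_0_1). intros a b _ _. split; [|split; [|split]].
    + unfold f. apply HB'; auto.
    + unfold f. apply HA'; auto.
    + apply (ex_derive_ext (fun z => pd F v (P z b) (T z b))).
      { intros z. cbv beta. unfold f. symmetry. apply (HA F); auto. }
      apply HB'; auto.
    + apply (ex_derive_ext (fun z => pd F u (P a z) (T a z))).
      { intros z. cbv beta. unfold f. symmetry. apply (HB F); auto. }
      apply HA'; auto.
  - assert (E : (fun a b => Derive (fun z => Derive (fun t => f z t) b) a) = (fun a b => pd (pd F v) u (P a b) (T a b))).
    { extensionality a; extensionality b. rewrite E1. apply HB; auto. }
    rewrite E. apply C1; auto. apply (smooth_pd N l (pd F v) u (smooth_pd N l F v HF Hv) Hu 0%nat).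
  - assert (E : (fun a b => Derive (fun z => Derive (fun t => f t z) a) b) = (fun a b => pd (pd F u) v (P a b) (T a b))).
    { extensionality a; extensionality b. rewrite E2. apply HA; auto. }
    rewrite E. apply C1; auto. apply (smooth_pd N l (pd F u) v (smooth_pd N l F u HF Hu) Hv 0%nat).
Qed.

End SchwarzM.
Import SchwarzM.

Lemma pd_swap_all N l F v k i p t : smooth N l F -> coord_ok N l v ->
  pd (pd F v) (Some (k, i)) p t = pd (pd F (Some (k, i))) v p t.
Proof.
  intros HF Hv. destruct (classic (Some (k, i) = v)) as [E|E].
  { subst; auto. }
  destruct (classic (coord_ok N l (Some (k, i)))) as [Hu|Hu].
  - apply (pd_swap N l); auto.
  - rewrite (pd_irr N l (pd F v) k i); auto.
    2:{ apply (smooth_pd N l F v HF Hv 0%nat). }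
    rewrite (pd_irr N l F k i); auto. 2:{ apply (HF 0%nat). }
    rewrite pd_const; auto.
Qed.

Lemma pd_fsum_eq K l n (f : nat -> jet -> R -> R) u p t :
  (forall m, (m < n)%nat -> Hp K l (f m)) -> coord_ok K l u ->
  pd (fun p t => fsum n (fun m => f m p t)) u p t = fsum n (fun m => pd (f m) u p t).
Proof.
  induction n; intros H Hu; simpl.
  - rewrite pd_const; auto.
  - rewrite (pd_plus_eq (fun p t => fsum n (fun m => f m p t)) (f n)).
    + rewrite IHn; auto.
    + apply (Hp_fsum K l n f); auto.
    + apply H; auto.
Qed.

Lemma L1 N l F k i p t : smooth N l F -> (k <= S N)%nat -> (i < l)%nat ->
  pd (Dt l N F) (Some (k, i)) p t =
  Dt l N (pd F (Some (k, i))) p t + (match k with O => 0 | S k' => pd F (Some (k', i)) p t end).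
Proof.
  intros HF Hk Hi.
  assert (Hu : coord_ok (S N) l (Some (k, i))) by (simpl; auto).
  assert (HpF : forall c, coord_ok N l c -> Hp (S N) l (pd F c)).
  { intros c Hc. apply (smooth_Hp N). apply smooth_pd; auto. }
  unfold Dt at 1.
  rewrite (pd_plus_eq (pd F None)).
  2:{ apply HpF; simpl; auto. }
  2:{ apply (Hp_fsum (S N) l (S N) (fun j p t => fsum l (fun i' => pd F (Some (j, i')) p t * p (S j) i'))); auto.
      intros j Hj. apply (Hp_fsum (S N) l l (fun i' p t => pd F (Some (j, i')) p t * p (S j) i')).
      intros i' Hi'. apply (Hp_mult (S N) l (pd F (Some (j, i'))) (fun p _ => p (S j) i')).
      - apply HpF; simpl; split; lia.
      - intros c _ p' t'. eexists; apply partial_proj. }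
  rewrite (pd_fsum_eq (S N) l (S N) (fun j p t => fsum l (fun i' => pd F (Some (j, i')) p t * p (S j) i'))); auto.
  2:{ intros j Hj. apply (Hp_fsum (S N) l l (fun i' p t => pd F (Some (j, i')) p t * p (S j) i')).
      intros i' Hi'. apply (Hp_mult (S N) l (pd F (Some (j, i'))) (fun p _ => p (S j) i')).
      - apply HpF; simpl; split; lia.
      - intros c _ p' t'. eexists; apply partial_proj. }
  rewrite (fsum_ext (S N) _ (fun j => fsum l (fun i' => pd (pd F (Some (k, i))) (Some (j, i')) p t * p (S j) i') +
       (if Nat.eqb (S j) k then pd F (Some (j, i)) p t else 0))).
  2:{ intros j Hj.
      rewrite (pd_fsum_eq (S N) l l (fun i' p t => pd F (Some (j, i')) p t * p (S j) i')); auto.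
      2:{ intros i' Hi'. apply (Hp_mult (S N) l (pd F (Some (j, i'))) (fun p _ => p (S j) i')).
          - apply HpF; simpl; split; lia.
          - intros c _ p' t'. eexists; apply partial_proj. }
      rewrite (fsum_ext l _ (fun i' => pd (pd F (Some (k, i))) (Some (j, i')) p t * p (S j) i' +
          pd F (Some (j, i')) p t * (if (Nat.eqb (S j) k && Nat.eqb i' i)%bool then 1 else 0))).
      2:{ intros i' Hi'. rewrite pd_mult_eq.
          - rewrite (pd_eq _ _ _ _ _ (partial_proj (S j) i' (Some (k, i)) p t)).
            rewrite (pd_swap_all N l); auto. simpl; split; lia.
          - apply HpF; auto; simpl; split; lia.
          - eexists; apply partial_proj. }
      rewrite fsum_plus. f_equal.
      destruct (Nat.eqb (S j) k) eqn:Ej; simpl.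
      - rewrite (fsum_ext l _ (fun i' => if Nat.eqb i' i then pd F (Some (j, i')) p t else 0)).
        + rewrite fsum_delta; auto.
        + intros i' _. destruct (Nat.eqb i' i); ring.
      - apply fsum_zero. intros; ring. }
  rewrite fsum_plus. unfold Dt. rewrite (pd_swap_all N l) by (auto; simpl; auto).
  assert (Ex : fsum (S N) (fun j => if Nat.eqb (S j) k then pd F (Some (j, i)) p t else 0) =
      match k with O => 0 | S k' => pd F (Some (k', i)) p t end).
  { destruct k as [|k'].
    - apply fsum_zero. intros; auto.
    - rewrite (fsum_ext (S N) _ (fun j => if Nat.eqb j k' then pd F (Some (j, i)) p t else 0)).
      + apply fsum_delta. lia.
      + intros j _. reflexivity. }
  rewrite Ex. ring.
Qed.

Section Pro.
Variable l : nat.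
Variable f : (nat -> R) -> R -> nat -> R.
Hypothesis Hf : forall i, (i < l)%nat -> smooth 0 l (comp0 f i).

Lemma prolong_smooth j a N : (j <= N)%nat -> (a < l)%nat -> smooth N l (Gc (prolong l f) j a).
Proof.
  intros Hj Ha k. apply (Ck_mono_le k j). auto.
  change (Gc (prolong l f) j a) with (Dn l j (comp0 f a)). apply smooth_Dn; auto.
Qed.

Lemma prolong_Dt j a N p t : (j <= N)%nat -> (a < l)%nat ->
  Dt l N (Gc (prolong l f) j a) p t = prolong l f p t (S j) a.
Proof.
  intros Hj Ha. change (Gc (prolong l f) j a) with (Dn l j (comp0 f a)).
  rewrite (Dt_order j N l); auto. apply (smooth_Dn l _ j (Hf a Ha) 0%nat).
Qed.

Lemma Dt_comp_pro N F p t : smooth N l F ->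
  Dt l N (comp F (prolong l f)) p t = comp (Dt l N F) (prolong l f) p t.
Proof.
  intros HF. apply Dt_comp; auto.
  - intros; apply prolong_smooth; auto.
  - intros; apply prolong_Dt; auto.
Qed.

Lemma Dn_comp_pro F0 : smooth 0 l F0 -> forall j p t,
  Dn l j (comp F0 (prolong l f)) p t = comp (Dn l j F0) (prolong l f) p t.
Proof.
  intros H0 j. induction j; intros p t; simpl; auto.
  assert (E : Dn l j (comp F0 (prolong l f)) = comp (Dn l j F0) (prolong l f)).
  { extensionality p'; extensionality t'; auto. }
  rewrite E. apply Dt_comp_pro. apply smooth_Dn; auto.
Qed.
End Pro.

Lemma Dt_proj l j i p t : (i < l)%nat -> Dt l j (fun p _ => p j i) p t = p (S j) i.
Proof.
  intros Hi. unfold Dt.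
  rewrite (pd_eq _ _ _ _ _ (partial_proj j i None p t)).
  rewrite (fsum_ext (S j) _ (fun j' => if Nat.eqb j' j then p (S j') i else 0)).
  - rewrite fsum_delta by lia. ring.
  - intros j' Hj'.
    rewrite (fsum_ext l _ (fun i' => if Nat.eqb j' j then (if Nat.eqb i' i then p (S j') i' else 0) else 0)).
    + destruct (Nat.eqb j' j); [apply fsum_delta; auto|apply fsum_zero; auto].
    + intros i' Hi'. rewrite (pd_eq _ _ _ _ _ (partial_proj j i (Some (j', i')) p t)).
      rewrite (Nat.eqb_sym j j'), (Nat.eqb_sym i i').
      destruct (Nat.eqb j' j), (Nat.eqb i' i); simpl; ring.
Qed.

Lemma Dn_proj l i j p t : (i < l)%nat -> Dn l j (fun p _ => p O i) p t = p j i.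
Proof.
  intros Hi. revert p t; induction j; intros p t; simpl; auto.
  assert (E : Dn l j (fun p _ => p O i) = fun p _ => p j i).
  { extensionality p'; extensionality t'; auto. }
  rewrite E. apply Dt_proj; auto.
Qed.

Lemma Jac_eq Qbar (p : jet) t a i : Jac Qbar (p O) t a i = pd (comp0 Qbar a) (Some (O, i)) p t.
Proof. reflexivity. Qed.

Lemma F3 l Qbar a i : (forall i, (i < l)%nat -> smooth 0 l (comp0 Qbar i)) -> (a < l)%nat -> (i < l)%nat ->
  forall k,
  (forall p t, pd (Dn l k (comp0 Qbar a)) (Some (k, i)) p t = pd (comp0 Qbar a) (Some (O, i)) p t) /\
  (forall p t, pd (Dn l (S k) (comp0 Qbar a)) (Some (k, i)) p t =
               INR (S k) * Dt l 0 (pd (comp0 Qbar a) (Some (O, i))) p t).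
Proof.
  intros HQ Ha Hi. pose proof (HQ a Ha) as H0.
  assert (HJ : cont_jet 0 l (pd (comp0 Qbar a) (Some (O, i)))).
  { apply (smooth_pd 0 l (comp0 Qbar a) (Some (O, i)) H0 ltac:(simpl; split; lia) 0%nat). }
  induction k as [|k [IH1 IH2]].
  - split; [reflexivity|]. intros p t. simpl Dn.
    rewrite (L1 0 l) by (auto; lia). simpl INR. ring.
  - assert (A1 : forall p t, pd (Dn l (S k) (comp0 Qbar a)) (Some (S k, i)) p t = pd (comp0 Qbar a) (Some (O, i)) p t).
    { intros p t. change (Dn l (S k) (comp0 Qbar a)) with (Dt l k (Dn l k (comp0 Qbar a))).
      rewrite (L1 k l) by (auto; apply smooth_Dn; auto).
      rewrite (pd_irr k l (Dn l k (comp0 Qbar a)) (S k) i).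
      - rewrite Dt_const, IH1. ring.
      - apply (smooth_Dn l _ k H0 0%nat).
      - simpl; lia. }
    split; auto. intros p t.
    change (Dn l (S (S k)) (comp0 Qbar a)) with (Dt l (S k) (Dn l (S k) (comp0 Qbar a))).
    rewrite (L1 (S k) l) by (auto; apply smooth_Dn; auto).
    assert (E : pd (Dn l (S k) (comp0 Qbar a)) (Some (S k, i)) = pd (comp0 Qbar a) (Some (O, i))).
    { extensionality p'; extensionality t'; auto. }
    rewrite E, IH2, (Dt_order 0 (S k) l); auto; [|lia].
    rewrite (S_INR (S k)). ring.
Qed.

Lemma fsum_minus_scal n c f g : fsum n f - c * fsum n g = fsum n (fun k => f k - c * g k).
Proof. induction n; simpl; [ring|rewrite <- IHn; ring]. Qed.


Theorem proposition1p1 (l r : nat) (Y : jet -> R -> R)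
  (Qbar Q : (nat -> R) -> R -> nat -> R)
  (HY : smooth (S r) l Y)
  (HQbar : forall i, (i < l)%nat -> smooth O l (comp0 Qbar i))
  (HQ : forall i, (i < l)%nat -> smooth O l (comp0 Q i))
  (Hinv1 : forall x t i, (i < l)%nat -> Q (Qbar x t) t i = x i)
  (Hinv2 : forall y t i, (i < l)%nat -> Qbar (Q y t) t i = y i)
  (Hdet : forall x t, det l (Jac Qbar x t) <> 0) :
  let Ytilde := fun w t => Y (prolong l Q w t) t in
  forall (p : jet) (t : R) (i : nat), (i < l)%nat ->
    Oop l r Y p t i =
    fsum l (fun a => Jac Qbar (p O) t a i * Oop l r Ytilde (prolong l Qbar p t) t a).
Proof.
  intros Yt p t i Hi.
  set (W := prolong l Qbar).
  assert (HYt : smooth (S r) l Yt).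
  { change Yt with (comp Y (prolong l Q)).
    apply (smooth_comp (S r) l); auto. intros; apply prolong_smooth; auto. }
  assert (HD : forall p t j i', (i' < l)%nat -> prolong l Q (W p t) t j i' = p j i').
  { intros p' t' j i' Hi'.
    change (prolong l Q (W p' t') t' j i') with (comp (Dn l j (comp0 Q i')) W p' t').
    unfold W. rewrite <- (Dn_comp_pro l Qbar HQbar (comp0 Q i') (HQ i' Hi')).
    assert (E : comp (comp0 Q i') (prolong l Qbar) = fun p _ => p O i').
    { extensionality p''; extensionality t''. unfold comp, comp0. apply Hinv1; auto. }
    rewrite E. apply Dn_proj; auto. }
  assert (EY : Y = comp Yt W).
  { extensionality p'; extensionality t'. unfold comp, Yt. symmetry.
    apply (cont_dep (S r) l Y); [apply (HY 0%nat)|]. intros j i' _ Hi'. apply HD; auto. }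
  assert (HW : forall j a N, (j <= N)%nat -> (a < l)%nat -> smooth N l (Gc W j a))
    by (intros; apply prolong_smooth; auto).
  assert (HPY : forall k p t, pd Y (Some (k, i)) p t =
     pd Yt None (W p t) t * 0 +
     fsum (S (S r)) (fun j => fsum l (fun a => pd Yt (Some (j, a)) (W p t) t * pd (Gc W j a) (Some (k, i)) p t))).
  { intros k p' t'. rewrite EY. apply pd_eq. apply (partial_comp (S r) l).
    - apply (HYt 0%nat).
    - intros c Hc p'' t''. apply (smooth_ex (S r) l); auto.
    - intros c Hc. apply (smooth_pd (S r) l Yt c HYt Hc 0%nat).
    - intros j a Hj Ha p'' t''. apply (smooth_Hp (S r) k l); [apply HW; auto|]. simpl; split; lia. }
  set (Jf := fun a => pd (comp0 Qbar a) (Some (O, i))).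
  assert (HGz : forall j a k p t, (a < l)%nat -> (j < k)%nat -> pd (Gc W j a) (Some (k, i)) p t = 0).
  { intros j a k p' t' Ha Hjk. rewrite (pd_irr j l (Gc W j a) k i); auto.
    - apply (HW j a j ltac:(lia) Ha 0%nat).
    - simpl; lia. }
  assert (HPY1 : forall p t, pd Y (Some (S r, i)) p t =
     fsum l (fun a => comp (pd Yt (Some (S r, a))) W p t * Jf a p t)).
  { intros p' t'. rewrite HPY. change (fsum (S (S r)) ?g) with (fsum (S r) g + g (S r)). cbv beta.
    rewrite fsum_zero.
    2:{ intros j Hj. apply fsum_zero. intros a Ha. rewrite HGz; auto. ring. }
    rewrite Rmult_0_r, !Rplus_0_l. apply fsum_ext. intros a Ha.
    unfold comp, Jf. f_equal. apply (F3 l Qbar a i HQbar Ha Hi (S r)). }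
  assert (HPY0 : pd Y (Some (r, i)) p t =
     fsum l (fun a => comp (pd Yt (Some (r, a))) W p t * Jf a p t +
                       comp (pd Yt (Some (S r, a))) W p t * (INR (S r) * Dt l 0 (Jf a) p t))).
  { rewrite HPY. change (fsum (S (S r)) ?g) with (fsum r g + g r + g (S r)). cbv beta.
    rewrite fsum_zero.
    2:{ intros j Hj. apply fsum_zero. intros a Ha. rewrite HGz; auto. ring. }
    rewrite Rmult_0_r, !Rplus_0_l, <- fsum_plus. apply fsum_ext. intros a Ha.
    unfold comp, Jf. f_equal.
    - f_equal. apply (F3 l Qbar a i HQbar Ha Hi r).
    - f_equal. apply (F3 l Qbar a i HQbar Ha Hi r). }
  assert (HJs : forall a, (a < l)%nat -> smooth 0 l (Jf a)).
  { intros a Ha. apply smooth_pd; auto. simpl; split; lia. }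
  assert (HCs : forall a, (a < l)%nat -> smooth (S r) l (comp (pd Yt (Some (S r, a))) W)).
  { intros a Ha. apply (smooth_comp (S r) l); [apply smooth_pd; auto; simpl; split; lia|].
    intros; apply HW; auto. }
  assert (HDt : Dt l (S r) (pd Y (Some (S r, i))) p t =
     fsum l (fun a => comp (Dt l (S r) (pd Yt (Some (S r, a)))) W p t * Jf a p t +
                       comp (pd Yt (Some (S r, a))) W p t * Dt l 0 (Jf a) p t)).
  { rewrite (Dt_ext l (S r) _ _ p t HPY1).
    rewrite (Dt_fsum (S r) l l (fun a p t => comp (pd Yt (Some (S r, a))) W p t * Jf a p t)).
    2:{ intros a Ha. apply (Hp_mult (S r) l); [apply (smooth_Hp (S r)); auto|apply (smooth_Hp 0); auto]. }
    apply fsum_ext. intros a Ha.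
    rewrite (Dt_mult (S r) l); [| apply (smooth_Hp (S r)); auto | apply (smooth_Hp 0); auto].
    unfold W. rewrite (Dt_comp_pro l Qbar HQbar (S r)).
    2:{ apply smooth_pd; auto. simpl; split; lia. }
    rewrite (Dt_order 0 (S r) l (Jf a)); [|apply (HJs a Ha 0%nat)|lia]. reflexivity. }
  unfold Oop. rewrite HPY0, HDt, fsum_minus_scal.
  apply fsum_ext. intros a Ha. rewrite Jac_eq. fold (Jf a). unfold comp. fold W. ring.
Qed.
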